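(* Let $\alpha$ be any graph function on a strongly connected directed graph $G$. Then any fair infinite sequence of raising operations applied starting from $\alpha$ produces graph functions converging to a raising-balanced graph function $\alpha^R$, and $\alpha^R$ is the same for all fair sequences of raising operations (independent of the order of operations). Symmetrically, any fair infinite sequence of lowering operations starting from $\alpha$ converges to a lowering-balanced graph function $\alpha^L$ that is independent of the order of operations.
   Context: $G$ is a strongly connected directed graph on vertex set $\{1,\dots,n\}$ (self-loops allowed). A graph function assigns a real weight $\alpha_{uv}$ to each edge $(u,v)$. Let $\alpha_v^{\text{in}}=\max_{u:(u,v)\in G}\alpha_{uv}$, $\alpha_v^{\text{out}}=\max_{w:(v,w)\in G}\alpha_{vw}$. For $x\in\mathbb R$ and $S$ a set of vertices, $\alpha+xS$ is the graph function $(\alpha+xS)_{uv}=\alpha_{uv}+x(I_S(u)-I_S(v))$, where $I_S$ is the indicator of $S$. A balancing operation at $v$ replaces $\alpha$ by $\alpha+\frac{\alpha_v^{\text{in}}-\alpha_v^{\text{out}}}{2}\{v\}$ (incoming edges at $v$ are increased by $(\alpha_v^{\text{out}}-\alpha_v^{\text{in}})/2$, outgoing edges decreased by the same amount, a self-loop unchanged). The raising imbalance at $v$ is $\rho_v^R=\max\{0,\alpha_v^{\text{out}}-\alpha_v^{\text{in}}\}$ and the lowering imbalance is $\rho_v^L=\max\{0,\alpha_v^{\text{in}}-\alpha_v^{\text{out}}\}$. A raising operation at $v$ performs the balancing operation at $v$ if $\rho^R_v>0$ and does nothing otherwise; a lowering operation at $v$ performs it if $\rho^L_v>0$ and does nothing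 otherwise. $\alpha$ is raising-balanced if $\rho^R_v=0$ for all $v$, lowering-balanced if $\rho^L_v=0$ for all $v$. A sequence of operations (each at a specified vertex) is fair if every vertex occurs infinitely often. *)

(* Defs.v *)
From HB Require Import structures.
From mathcomp Require Import all_boot all_order all_algebra.
From mathcomp Require Import all_classical all_reals topology normedtype sequences.
Set Implicit Arguments. Unset Strict Implicit. Unset Printing Implicit Defensive.
Import Order.TTheory GRing.Theory Num.Theory.
Local Open Scope ring_scope.

(* A directed graph on {0,..,n-1} is an edge relation G : rel 'I_n
   (self-loops allowed).  A graph function is a map alpha : 'I_n -> 'I_n -> R;
   only its values on edges (G u v) are meaningful. *)

Definition strongly_connected (n : nat) (G : rel 'I_n) : Prop :=
  forall u v : 'I_n, connect G u v.

Section GraphFun.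
Variables (R : realType) (n : nat) (G : rel 'I_n).
Implicit Types (alpha : 'I_n -> 'I_n -> R) (v : 'I_n).

(* alpha_v^in = max over in-edges (u,v) of alpha u v (0 if there is none,
   which cannot happen in a strongly connected graph with n >= 2). *)
Definition alpha_in alpha v : R :=
  match [pick u | G u v] with
  | Some u0 => \big[Num.max/alpha u0 v]_(u | G u v) alpha u v
  | None => 0
  end.

Definition alpha_out alpha v : R :=
  match [pick w | G v w] with
  | Some w0 => \big[Num.max/alpha v w0]_(w | G v w) alpha v w
  | None => 0
  end.

Definition shift alpha (x : R) (S : pred 'I_n) : 'I_n -> 'I_n -> R :=
  fun u w => alpha u w + x * ((S u)%:R - (S w)%:R).

Definition balance alpha v : 'I_n -> 'I_n -> R :=
  shift alpha ((alpha_in alpha v - alpha_out alpha v) / 2) (pred1 v).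

Definition rhoR alpha v : R := Num.max 0 (alpha_out alpha v - alpha_in alpha v).
Definition rhoL alpha v : R := Num.max 0 (alpha_in alpha v - alpha_out alpha v).

Definition raise alpha v : 'I_n -> 'I_n -> R :=
  if 0 < rhoR alpha v then balance alpha v else alpha.
Definition lower alpha v : 'I_n -> 'I_n -> R :=
  if 0 < rhoL alpha v then balance alpha v else alpha.

Definition raising_balanced alpha : Prop := forall v, rhoR alpha v = 0.
Definition lowering_balanced alpha : Prop := forall v, rhoL alpha v = 0.

Fixpoint iter_ops (op : ('I_n -> 'I_n -> R) -> 'I_n -> 'I_n -> 'I_n -> R)
  alpha (s : nat -> 'I_n) (k : nat) : 'I_n -> 'I_n -> R :=
  match k with
  | 0 => alpha
  | k'.+1 => op (iter_ops op alpha s k') (s k')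
  end.

End GraphFun.

Definition fair (n : nat) (s : nat -> 'I_n) : Prop :=
  forall (v : 'I_n) (N : nat), exists k, (N <= k)%N /\ s k = v.

(* Main.v *)
Require Import Defs.
From HB Require Import structures.
From mathcomp Require Import all_boot all_order all_algebra.
From mathcomp Require Import all_classical all_reals topology normedtype sequences.
From mathcomp Require Import ring lra.
Import Order.TTheory GRing.Theory Num.Theory.
Import numFieldNormedType.Exports.
Local Open Scope classical_set_scope.
Local Open Scope ring_scope.
Set Implicit Arguments. Unset Strict Implicit.

Lemma bigmax_ge (R : realType) (I : finType) (P : pred I) (F : I -> R) x0 i :
  P i -> F i <= \big[Num.max/x0]_(j | P j) F j.
Proof.
move=> Pi; rewrite unlock /reducebig.
have : i \in index_enum I by rewrite mem_index_enum.
elim: (index_enum I) => [//|a r IH] /=.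
rewrite in_cons => /orP [/eqP <-|ir]; first by rewrite Pi le_max lexx.
case: (P a); last exact: IH.
by rewrite le_max IH ?orbT.
Qed.

Lemma bigmax_le (R : realType) (I : finType) (P : pred I) (F : I -> R) x0 c :
  x0 <= c -> (forall i, P i -> F i <= c) -> \big[Num.max/x0]_(j | P j) F j <= c.
Proof.
move=> h0 hF; apply: (big_ind (fun x => x <= c)) => //.
by move=> x y hx hy; rewrite ge_max hx hy.
Qed.

Lemma in_mono (R : realType) n (G : rel 'I_n) (b g : 'I_n -> 'I_n -> R) c v :
  0 <= c -> (forall u, G u v -> b u v <= g u v + c) ->
  alpha_in G b v <= alpha_in G g v + c.
Proof.
move=> c0 h; rewrite /alpha_in; case: pickP => [u0 Hu0|_]; last by rewrite add0r.
apply: bigmax_le; first by apply: le_trans (h _ Hu0) _; rewrite lerD2r bigmax_ge.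
by move=> u Hu; apply: le_trans (h _ Hu) _; rewrite lerD2r bigmax_ge.
Qed.

Lemma out_mono (R : realType) n (G : rel 'I_n) (b g : 'I_n -> 'I_n -> R) c v :
  0 <= c -> (forall w, G v w -> b v w <= g v w + c) ->
  alpha_out G b v <= alpha_out G g v + c.
Proof.
move=> c0 h; rewrite /alpha_out; case: pickP => [u0 Hu0|_]; last by rewrite add0r.
apply: bigmax_le; first by apply: le_trans (h _ Hu0) _; rewrite lerD2r bigmax_ge.
by move=> u Hu; apply: le_trans (h _ Hu) _; rewrite lerD2r bigmax_ge.
Qed.

Lemma in_ge (R : realType) n (G : rel 'I_n) (b : 'I_n -> 'I_n -> R) u v :
  G u v -> b u v <= alpha_in G b v.
Proof.
move=> h; rewrite /alpha_in; case: pickP => [u0 Hu0|/(_ u)]; last by rewrite h.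
exact: bigmax_ge.
Qed.

Lemma out_le (R : realType) n (G : rel 'I_n) (b : 'I_n -> 'I_n -> R) c v :
  (exists w, G v w) -> (forall w, G v w -> b v w <= c) -> alpha_out G b v <= c.
Proof.
move=> [w0 hw0] h; rewrite /alpha_out; case: pickP => [u0 Hu0|/(_ w0)]; last by rewrite hw0.
by apply: bigmax_le => //; apply: h.
Qed.
From mathcomp Require Import zify.

Definition ap (R : realType) n (alpha : 'I_n -> 'I_n -> R) (p : 'I_n -> R) :=
  fun u w => alpha u w + p u - p w.

Definition Tstep (R : realType) n (G : rel 'I_n) (alpha : 'I_n -> 'I_n -> R) (p : 'I_n -> R) v :=
  fun u => p u - (u == v)%:R * (rhoR G (ap alpha p) v / 2).

Fixpoint Pseq (R : realType) n (G : rel 'I_n) (alpha : 'I_n -> 'I_n -> R) (s : nat -> 'I_n) k : 'I_n -> R :=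
  match k with 0 => fun _ => 0 | k'.+1 => Tstep G alpha (Pseq G alpha s k') (s k') end.

Lemma rhoR_ge0 (R : realType) n (G : rel 'I_n) (b : 'I_n -> 'I_n -> R) v : 0 <= rhoR G b v.
Proof. by rewrite /rhoR le_max lexx. Qed.

Lemma rhoR_ge (R : realType) n (G : rel 'I_n) (b : 'I_n -> 'I_n -> R) v :
  alpha_out G b v - alpha_in G b v <= rhoR G b v.
Proof. by rewrite /rhoR le_max lexx orbT. Qed.

Lemma rhoR_le (R : realType) n (G : rel 'I_n) (b : 'I_n -> 'I_n -> R) v c :
  0 <= c -> alpha_out G b v - alpha_in G b v <= c -> rhoR G b v <= c.
Proof. by move=> h1 h2; rewrite /rhoR ge_max h1 h2. Qed.

Lemma rhoR_pos (R : realType) n (G : rel 'I_n) (b : 'I_n -> 'I_n -> R) v :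
  0 < rhoR G b v -> rhoR G b v = alpha_out G b v - alpha_in G b v.
Proof.
move=> h; have h1 := rhoR_ge G b v; have h0 := rhoR_ge0 G b v.
case: (leP (alpha_out G b v - alpha_in G b v) 0) => h2.
  by have := rhoR_le (lexx 0) h2; lra.
apply/eqP; rewrite eq_le h1 andbT; apply: rhoR_le; [exact: ltW| exact: lexx].
Qed.

Lemma rhoR_nonpos (R : realType) n (G : rel 'I_n) (b : 'I_n -> 'I_n -> R) v :
  ~~ (0 < rhoR G b v) -> rhoR G b v = 0.
Proof. by move=> h; apply/eqP; rewrite eq_le rhoR_ge0 andbT leNgt. Qed.

Lemma raise_ap (R : realType) n (G : rel 'I_n) alpha (p : 'I_n -> R) v :
  raise G (ap alpha p) v = ap alpha (Tstep G alpha p v).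
Proof.
apply/funext => u; apply/funext => w.
rewrite /raise /Tstep /ap /balance /Defs.shift /=.
case: ifP => h.
  rewrite (rhoR_pos h) /ap; case: (u == v); case: (w == v) => /=; ring.
rewrite (rhoR_nonpos (negbT h)); ring.
Qed.

Lemma iter_ap (R : realType) n (G : rel 'I_n) (alpha : 'I_n -> 'I_n -> R) (s : nat -> 'I_n) k :
  iter_ops (raise G) alpha s k = ap alpha (Pseq G alpha s k).
Proof.
elim: k => [|k IH] /=.
  by apply/funext => u; apply/funext => w; rewrite /ap; ring.
by rewrite IH raise_ap.
Qed.

Lemma Tstep_le (R : realType) n (G : rel 'I_n) alpha (p : 'I_n -> R) v u :
  Tstep G alpha p v u <= p u.
Proof.
rewrite /Tstep lerBlDr lerDl; apply: mulr_ge0; first by case: (u == v).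
by apply: divr_ge0 => //; apply: rhoR_ge0.
Qed.

Lemma Tstep_mono (R : realType) n (G : rel 'I_n) alpha (p p' : 'I_n -> R) v :
  (forall u, p u <= p' u) -> forall u, Tstep G alpha p v u <= Tstep G alpha p' v u.
Proof.
move=> hp u; rewrite /Tstep; case: eqP => [->|_] /=; last by rewrite !mul0r !subr0.
rewrite !mul1r.
set d := p' v - p v.
have d0 : 0 <= d by rewrite subr_ge0.
have hout : alpha_out G (ap alpha p') v <= alpha_out G (ap alpha p) v + d.
  apply: out_mono => // w _; rewrite /ap /d; move: (hp w); lra.
have hin : alpha_in G (ap alpha p) v <= alpha_in G (ap alpha p') v + d.
  apply: in_mono => // w _; rewrite /ap /d; move: (hp w); lra.
have : rhoR G (ap alpha p') v <= rhoR G (ap alpha p) v + 2 * d.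
  apply: rhoR_le; first by apply: addr_ge0; [apply: rhoR_ge0|lra].
  move: (rhoR_ge G (ap alpha p) v); lra.
rewrite /d; lra.
Qed.

Definition fixpt (R : realType) n (G : rel 'I_n) (alpha : 'I_n -> 'I_n -> R) (q : 'I_n -> R) :=
  forall v, rhoR G (ap alpha q) v = 0.

Lemma Tstep_fix (R : realType) n (G : rel 'I_n) (alpha : 'I_n -> 'I_n -> R) q v u :
  fixpt G alpha q -> Tstep G alpha q v u = q u.
Proof. by move=> h; rewrite /Tstep h mul0r mulr0 subr0. Qed.

Lemma Pseq_lb (R : realType) n (G : rel 'I_n) (alpha : 'I_n -> 'I_n -> R) q s :
  fixpt G alpha q -> (forall u, q u <= 0) -> forall k u, q u <= Pseq G alpha s k u.
Proof.
move=> hq h0; elim=> [|k IH] u //=.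
by rewrite -(Tstep_fix (s k) u hq); apply: Tstep_mono.
Qed.

Lemma Pseq_noninc (R : realType) n (G : rel 'I_n) (alpha : 'I_n -> 'I_n -> R) s u :
  {homo (fun k => Pseq G alpha s k u) : a b / (a <= b)%N >-> b <= a}.
Proof.
move=> a b /subnK <-; elim: (b - a)%N => [|d IH] /=; first by rewrite add0n.
by apply: le_trans (Tstep_le _ _ _ _ _) IH.
Qed.

Definition Lim (R : realType) n (G : rel 'I_n) (alpha : 'I_n -> 'I_n -> R) s (u : 'I_n) :=
  inf (range (fun k => Pseq G alpha s k u)).

Lemma Lim_props (R : realType) n (G : rel 'I_n) (alpha : 'I_n -> 'I_n -> R) q s :
  fixpt G alpha q -> (forall u, q u <= 0) ->
  forall u, [/\ (fun k => Pseq G alpha s k u) @ \oo --> Lim G alpha s u,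
     (forall k, Lim G alpha s u <= Pseq G alpha s k u),
     q u <= Lim G alpha s u &
     (forall e, 0 < e -> exists N, forall k, (N <= k)%N -> Pseq G alpha s k u < Lim G alpha s u + e)].
Proof.
move=> hq h0 u.
have hlb : has_lbound (range (fun k => Pseq G alpha s k u)).
  by exists (q u) => _ [k _ <-]; apply: Pseq_lb.
have hne : range (fun k => Pseq G alpha s k u) !=set0 by exists (Pseq G alpha s 0 u), 0%N.
split.
- exact: nonincreasing_cvgn (Pseq_noninc _ _ _ _) hlb.
- by move=> k; apply: ge_inf => //; exists k.
- by apply: lb_le_inf => // _ [k _ <-]; apply: Pseq_lb.
- move=> e e0; have [_ [N _ <-] hN] := inf_adherent e0 (conj hne hlb).
  exists N => k hk; apply: le_lt_trans hN; exact: Pseq_noninc.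
Qed.

Lemma Lim_fix (R : realType) n (G : rel 'I_n) (alpha : 'I_n -> 'I_n -> R) q s :
  fixpt G alpha q -> (forall u, q u <= 0) -> fair s -> fixpt G alpha (Lim G alpha s).
Proof.
move=> hq h0 hs v.
set L := Lim G alpha s.
set r := rhoR G (ap alpha L) v.
case: (ltP 0 r) => hr; last by apply/eqP; rewrite eq_le hr rhoR_ge0.
exfalso.
have e0 : 0 < r / 8 by lra.
have /fin_all_exists [N HN] : forall u : 'I_n, exists N, forall k, (N <= k)%N ->
    Pseq G alpha s k u < L u + r / 8.
  by move=> u; have [_ _ _] := Lim_props s hq h0 u; apply.
have [k [hk hsk]] := hs v (\max_u N u).
have hk' : forall u, Pseq G alpha s k u < L u + r / 8.
  move=> u; apply: HN; apply: leq_trans hk; exact: leq_bigmax.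
have hL : forall u, L u <= Pseq G alpha s k u.
  by move=> u; have [_ H _ _] := Lim_props s hq h0 u; apply: H.
have hout : alpha_out G (ap alpha L) v <= alpha_out G (ap alpha (Pseq G alpha s k)) v + r / 8.
  apply: out_mono; first lra.
  move=> w _; rewrite /ap; move: (hL v) (hk' w); lra.
have hin : alpha_in G (ap alpha (Pseq G alpha s k)) v <= alpha_in G (ap alpha L) v + r / 8.
  apply: in_mono; first lra.
  move=> w _; rewrite /ap; move: (hL v) (hk' w); lra.
have hrk := rhoR_ge G (ap alpha (Pseq G alpha s k)) v.
have hrL := rhoR_pos hr.
have hv := hL v; have hv1 := hk' v.
have := hL v; have [_ H _ _] := Lim_props s hq h0 v; move: (H k.+1) => /=.
rewrite /Tstep hsk eqxx mul1r -/L -/r.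
move: hrL; rewrite -/r => hrL.
lra.
Qed.

Lemma raise_main_fix (R : realType) n (G : rel 'I_n) (alpha : 'I_n -> 'I_n -> R) :
  (exists q, fixpt G alpha q) ->
  (exists alphaR : 'I_n -> 'I_n -> R,
     raising_balanced G alphaR /\
     forall s : nat -> 'I_n, fair s ->
       forall u v : 'I_n, G u v ->
         (fun k => iter_ops (raise G) alpha s k u v) @ \oo --> alphaR u v).
Proof.
move=> [q0 hq0].
set C := \sum_u `|q0 u|.
pose q u := q0 u - C.
have hapq : ap alpha q = ap alpha q0.
  by apply/funext => u; apply/funext => w; rewrite /ap /q; ring.
have hq : fixpt G alpha q by move=> v; rewrite hapq.
have hq0le : forall u, q u <= 0.
  move=> u; rewrite /q subr_le0 /C (bigD1 u) //=.
  apply: le_trans (ler_norm _) _; rewrite lerDl; apply: sumr_ge0 => i _; exact: normr_ge0.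
case: n G alpha q0 hq0 C q hapq hq hq0le => [|n'] G alpha q0 hq0 C q hapq hq hq0le.
  by exists alpha; split; [case|move=> s _ []].
pose s0 (k : nat) : 'I_n'.+1 := inord (k %% n'.+1).
have hs0 : fair s0.
  move=> v N; exists (N * n'.+1 + v)%N; split.
    by apply: (leq_trans _ (leq_addr _ _)); rewrite leq_pmulr.
  rewrite /s0 modnMDl modn_small //; exact: inord_val.
set L := Lim G alpha s0.
have hLfix : fixpt G alpha L := Lim_fix hq hq0le hs0.
have hL0 : forall u, L u <= 0.
  by move=> u; have [_ H _ _] := Lim_props s0 hq hq0le u; apply: (H 0%N).
exists (ap alpha L); split; first exact: hLfix.
move=> s hs u v _.
set L' := Lim G alpha s.
have hL'fix : fixpt G alpha L' := Lim_fix hq hq0le hs.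
have hL'0 : forall u, L' u <= 0.
  by move=> w; have [_ H _ _] := Lim_props s hq hq0le w; apply: (H 0%N).
have hLL : forall w, L' w = L w.
  move=> w; apply/eqP; rewrite eq_le.
  have [_ _ H1 _] := Lim_props s0 hL'fix hL'0 w.
  have [_ _ H2 _] := Lim_props s hLfix hL0 w.
  by rewrite H1 H2.
have -> : (fun k => iter_ops (raise G) alpha s k u v) =
          (fun k => alpha u v + Pseq G alpha s k u - Pseq G alpha s k v).
  by apply/funext => k; rewrite iter_ap.
rewrite /ap -!hLL.
have [Hu _ _ _] := Lim_props s hq hq0le u.
have [Hv _ _ _] := Lim_props s hq hq0le v.
apply: cvgB => //; apply: cvgD => //; exact: cvg_cst.
Qed.

Fixpoint wt (R : realType) n (a : 'I_n -> 'I_n -> R) (x : 'I_n) (s : seq 'I_n) : R :=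
  match s with [::] => 0 | y :: t => a x y + wt a y t end.

Lemma wt_cat (R : realType) n (a : 'I_n -> 'I_n -> R) x s1 s2 :
  wt a x (s1 ++ s2) = wt a x s1 + wt a (last x s1) s2.
Proof. by elim: s1 x => [|y t IH] x /=; rewrite ?add0r // IH addrA. Qed.

Lemma wt_rcons (R : realType) n (a : 'I_n -> 'I_n -> R) x s y :
  wt a x (rcons s y) = wt a x s + a (last x s) y.
Proof. by rewrite -cats1 wt_cat /= addr0. Qed.

Lemma wt_shift (R : realType) n (a : 'I_n -> 'I_n -> R) (l : R) x s :
  wt (fun u w => a u w - l) x s = wt a x s - l * (size s)%:R.
Proof.
elim: s x => [|y t IH] x /=; first by rewrite mulr0 subr0.
by rewrite IH -addn1 natrD; ring.
Qed.

Lemma nuniq_split (T : eqType) (s : seq T) :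
  ~~ uniq s -> exists s1 y s2 s3, s = s1 ++ y :: s2 ++ y :: s3.
Proof.
elim: s => [//|x t IH] /=; rewrite negb_and negbK.
case/orP => [hx|/IH [s1 [y [s2 [s3 ->]]]]].
  by case/splitPr: hx => p1 p2; exists [::], x, p1, p2.
by exists (x :: s1), y, s2, s3.
Qed.

Lemma closed_bound (R : realType) n (G : rel 'I_n) (a : 'I_n -> 'I_n -> R) (l : R) :
  (forall x s, path G x s -> last x s = x -> (0 < size s <= n)%N -> wt a x s <= l * (size s)%:R) ->
  forall x s, path G x s -> last x s = x -> wt a x s <= l * (size s)%:R.
Proof.
move=> H x s; have [m hm] := ubnP (size s); elim: m x s hm => // m IH x s hm hp hl.
case: (leqP (size s) n) => hsn.
  case: s hm hp hl hsn => [|y t] hm hp hl hsn; first by rewrite /= mulr0.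
  by apply: H.
have : ~~ uniq s.
  apply/negP => hu; have := uniq_leq_size hu (fun z _ => mem_enum 'I_n z).
  by rewrite size_enum_ord leqNgt hsn.
case/nuniq_split => s1 [y [s2 [s3 hs]]]; subst s.
move: hp; rewrite cat_path /= cat_path /= => /and3P [hp1 hy /and3P [hp3 hy2 hp4]].
move: hl; rewrite last_cat /= last_cat /= => hl.
have hsz : size (s1 ++ y :: s2 ++ y :: s3) = (size (s1 ++ y :: s3) + size (rcons s2 y))%N.
  by rewrite !size_cat /= size_rcons size_cat /=; lia.
have h1 : wt a x (s1 ++ y :: s3) <= l * (size (s1 ++ y :: s3))%:R.
  apply: IH.
  - by move: hm; rewrite !size_cat /= size_cat /=; lia.
  - by rewrite cat_path hp1 /= hy hp4.
  - by rewrite last_cat /=.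
have h2 : wt a y (rcons s2 y) <= l * (size (rcons s2 y))%:R.
  apply: IH.
  - by move: hm; rewrite size_rcons !size_cat /= size_cat /=; lia.
  - by rewrite rcons_path hp3 hy2.
  - by rewrite last_rcons.
rewrite hsz natrD mulrDr.
have -> : wt a x (s1 ++ y :: s2 ++ y :: s3) = wt a x (s1 ++ y :: s3) + wt a y (rcons s2 y).
  rewrite !wt_cat /= wt_cat /= wt_rcons; ring.
exact: lerD.
Qed.

Lemma short_exists n (G : rel 'I_n) x s :
  path G x s -> last x s = x -> (0 < size s)%N ->
  exists x' s', [/\ path G x' s', last x' s' = x' & (0 < size s' <= n)%N].
Proof.
have [m hm] := ubnP (size s); elim: m x s hm => // m IH x s hm hp hl hs0.
case: (leqP (size s) n) => hsn; first by exists x, s; rewrite hs0 hsn.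
have : ~~ uniq s.
  apply/negP => hu; have := uniq_leq_size hu (fun z _ => mem_enum 'I_n z).
  by rewrite size_enum_ord leqNgt hsn.
case/nuniq_split => s1 [y [s2 [s3 hs]]]; subst s.
move: hp; rewrite cat_path /= cat_path /= => /and3P [hp1 hy /and3P [hp3 hy2 hp4]].
apply: (IH y (rcons s2 y)).
- by move: hm; rewrite size_rcons !size_cat /= size_cat /=; lia.
- by rewrite rcons_path hp3 hy2.
- by rewrite last_rcons.
- by rewrite size_rcons.
Qed.

Fixpoint seqs n m : seq (seq 'I_n) :=
  match m with 0 => [:: [::]] | m'.+1 => [::] :: [seq x :: t | x <- enum 'I_n, t <- seqs n m'] end.

Lemma mem_seqs n m (s : seq 'I_n) : (size s <= m)%N -> s \in seqs n m.
Proof.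
elim: m s => [|m IH] [|x t] //= h.
rewrite in_cons; apply/orP; right; apply: allpairs_f; first by rewrite mem_enum.
exact: IH.
Qed.

Lemma argmax_seq (T : eqType) (R : realType) (f : T -> R) (l : seq T) :
  l != [::] -> exists2 e, e \in l & forall e', e' \in l -> f e' <= f e.
Proof.
elim: l => [//|x t IH] _.
case: (altP (t =P [::])) => [->|/IH [e he hm]].
  by exists x; rewrite ?mem_head // => e'; rewrite inE => /eqP ->.
case: (leP (f e) (f x)) => h.
  exists x; first exact: mem_head.
  by move=> e'; rewrite inE => /orP [/eqP ->//|/hm/le_trans]; apply.
exists e; first by rewrite inE he orbT.
by move=> e'; rewrite inE => /orP [/eqP ->|/hm//]; exact: ltW.
Qed.

Lemma in_none (R : realType) n (G : rel 'I_n) (b : 'I_n -> 'I_n -> R) v :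
  (forall u, G u v = false) -> alpha_in G b v = 0.
Proof. by move=> h; rewrite /alpha_in; case: pickP => [u hu|//]; rewrite h in hu. Qed.

Lemma out_none (R : realType) n (G : rel 'I_n) (b : 'I_n -> 'I_n -> R) v :
  (forall u, G v u = false) -> alpha_out G b v = 0.
Proof. by move=> h; rewrite /alpha_out; case: pickP => [u hu|//]; rewrite h in hu. Qed.

Lemma fix_exists (R : realType) n (G : rel 'I_n) (hG : strongly_connected G)
  (alpha : 'I_n -> 'I_n -> R) : exists q, fixpt G alpha q.
Proof.
case: (pickP (fun e : 'I_n * 'I_n => G e.1 e.2)) => [[u0 v0] /= huv0 | hnone]; last first.
  exists (fun _ => 0) => v; apply/eqP; rewrite eq_le rhoR_ge0 andbT.
  apply: rhoR_le => //.
  rewrite in_none ?out_none ?subrr // => u; [exact: (hnone (v, u))|exact: (hnone (u, v))].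
have [x1 [s1 [hp1 hl1 hsz1]]] : exists x' s', [/\ path G x' s', last x' s' = x' & (0 < size s' <= n)%N].
  have /connectP [p hp hl] := hG v0 u0.
  by apply: (short_exists (x := u0) (s := v0 :: p)) => //=; rewrite huv0.
pose cands := [seq c <- [seq (x, t) | x <- enum 'I_n, t <- seqs n n] |
   path G c.1 c.2 && (last c.1 c.2 == c.1) && (0 < size c.2)%N].
have mem_cands : forall x s, path G x s -> last x s = x -> (0 < size s <= n)%N -> (x, s) \in cands.
  move=> x s hp hl /andP [h0 hn]; rewrite mem_filter /= hp hl eqxx h0 /=.
  by apply: allpairs_f; [rewrite mem_enum|apply: mem_seqs].
have hne : cands != [::].
  by apply/eqP => hc; have := mem_cands _ _ hp1 hl1 hsz1; rewrite hc.
pose f (c : 'I_n * seq 'I_n) : R := wt alpha c.1 c.2 / (size c.2)%:R.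
have [[r ss] hmem hmax] := argmax_seq f hne.
move: hmem; rewrite mem_filter /= => /andP [/andP [/andP [hpss /eqP hlss] hsss] _].
set lam := f (r, ss).
have hshort : forall x s, path G x s -> last x s = x -> (0 < size s <= n)%N ->
    wt alpha x s <= lam * (size s)%:R.
  move=> x s hp hl hs; have := hmax _ (mem_cands _ _ hp hl hs).
  rewrite /f /= ler_pdivrMr // ltr0n; by case/andP: hs.
have hclosed := closed_bound hshort.
pose b := fun u w => alpha u w - lam.
have hcb : forall x s, path G x s -> last x s = x -> wt b x s <= 0.
  by move=> x s hp hl; rewrite /b wt_shift subr_le0; apply: hclosed.
have hss0 : wt b r ss = 0.
  rewrite /b wt_shift /lam /f /= divfK ?subrr //.
  by rewrite pnatr_eq0 -lt0n.
clear hmax; clearbody lam.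
pose S v := [set t : R | exists s, [/\ path G r s, last r s = v & t = wt b r s]].
have hS : forall v, has_sup (S v).
  move=> v; split.
    by have /connectP [p hp hl] := hG r v; exists (wt b r p), p.
  have /connectP [p hp hl] := hG v r.
  exists (- wt b v p) => _ [s [hs hls ->]].
  have := hcb r (s ++ p); rewrite cat_path hs hls hp last_cat hls -hl wt_cat hls.
  move=> /(_ erefl erefl); lra.
pose pi v := sup (S v).
have hsup : forall v s, path G r s -> last r s = v -> wt b r s <= pi v.
  by move=> v s hp hl; apply: (sup_upper_bound (hS v)); exists s.
have ha : forall u v, G u v -> pi u + b u v <= pi v.
  move=> u v huv; rewrite -lerBrDr; apply: ge_sup; first by case: (hS u).
  move=> _ [s [hs hls ->]]; rewrite lerBrDr.
  have := hsup v (rcons s v); rewrite rcons_path hs hls huv last_rcons wt_rcons hls.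
  by apply.
have hb : forall v e, 0 < e -> exists2 u, G u v & pi v - e < pi u + b u v.
  move=> v e he; have [_ [s [hp hl ->]] ht] := sup_adherent he (hS v).
  case/lastP: s hp hl ht => [|s' y] hp hl ht.
    move: hl => /= hl; subst v.
    case/lastP: ss hpss hlss hsss hss0 => [//|s'' y''] hpss hlss _ hss0.
    move: hpss hlss hss0; rewrite rcons_path last_rcons => /andP [hp'' hy''] hy; subst y''.
    rewrite wt_rcons => hss0.
    exists (last r s'') => //.
    have hh := hsup _ s'' hp'' erefl; move: ht hh hss0; rewrite /pi /=; lra.
  move: hp hl ht; rewrite rcons_path last_rcons wt_rcons => /andP [hp' hy] hyv; subst y.
  exists (last r s') => //.
  have hh := hsup _ s' hp' erefl; move: ht hh; rewrite /pi /=; lra.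
exists pi => v.
have [u1 hu1 _] := hb v 1 ltr01.
have hout_ex : exists w, G v w.
  have /connectP [p hp hl] := hG v u1.
  case: p hp hl => [|w p] /=; first by move=> _ hl; subst u1; exists v.
  by move=> /andP [hw _] _; exists w.
have hout : alpha_out G (ap alpha pi) v <= lam.
  apply: out_le => // w hw; have := ha v w hw; rewrite /ap /b; lra.
have hin : lam <= alpha_in G (ap alpha pi) v.
  rewrite leNgt; apply/negP => hlt.
  have he : 0 < lam - alpha_in G (ap alpha pi) v by rewrite subr_gt0.
  have [u hu hlt2] := hb v _ he.
  have := in_ge (ap alpha pi) hu; rewrite /ap; move: hlt2; rewrite /b; lra.
apply/eqP; rewrite eq_le rhoR_ge0 andbT; apply: rhoR_le => //; lra.
Qed.

Lemma raise_main (R : realType) n (G : rel 'I_n) (hG : strongly_connected G)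
  (alpha : 'I_n -> 'I_n -> R) :
  (exists alphaR : 'I_n -> 'I_n -> R,
     raising_balanced G alphaR /\
     forall s : nat -> 'I_n, fair s ->
       forall u v : 'I_n, G u v ->
         (fun k => iter_ops (raise G) alpha s k u v) @ \oo --> alphaR u v).
Proof. exact: raise_main_fix (fix_exists hG alpha). Qed.

Lemma lower_T (R : realType) n (G : rel 'I_n) (b : 'I_n -> 'I_n -> R) v :
  lower G b v = (fun x y => raise (fun a c => G c a) (fun a c => b c a) v y x).
Proof.
apply/funext => x; apply/funext => y; rewrite /lower /raise.
have -> : rhoR (fun a c => G c a) (fun a c => b c a) v = rhoL G b v by [].
case: ifP => // _; rewrite /balance /Defs.shift.
have -> : alpha_in (fun a c => G c a) (fun a c => b c a) v = alpha_out G b v by [].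
have -> : alpha_out (fun a c => G c a) (fun a c => b c a) v = alpha_in G b v by [].
ring.
Qed.

Lemma iter_T (R : realType) n (G : rel 'I_n) (alpha : 'I_n -> 'I_n -> R) s k :
  iter_ops (lower G) alpha s k =
  (fun x y => iter_ops (raise (fun a c => G c a)) (fun a c => alpha c a) s k y x).
Proof. by elim: k => [|k IH] //=; rewrite IH lower_T. Qed.

Unset Implicit Arguments.
Set Strict Implicit.

Theorem theorem2 (R : realType) (n : nat) (G : rel 'I_n)
  (hG : strongly_connected G) (alpha : 'I_n -> 'I_n -> R) :
  (exists alphaR : 'I_n -> 'I_n -> R,
     raising_balanced G alphaR /\
     forall s : nat -> 'I_n, fair s ->
       forall u v : 'I_n, G u v ->
         (fun k => iter_ops (raise G) alpha s k u v) @ \oo --> alphaR u v)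
  /\
  (exists alphaL : 'I_n -> 'I_n -> R,
     lowering_balanced G alphaL /\
     forall s : nat -> 'I_n, fair s ->
       forall u v : 'I_n, G u v ->
         (fun k => iter_ops (lower G) alpha s k u v) @ \oo --> alphaL u v).
Proof.
split; first exact: raise_main.
have hGT : strongly_connected (fun a c => G c a).
  by move=> u v; exact: etrans (connect_rev G u v) (hG v u).
have [aR [hbal hcv]] := raise_main hGT (fun a c => alpha c a).
exists (fun x y => aR y x); split; first exact: hbal.
move=> s hs u v huv.
have -> : (fun k => iter_ops (lower G) alpha s k u v) =
          (fun k => iter_ops (raise (fun a c => G c a)) (fun a c => alpha c a) s k v u).
  by apply/funext => k; rewrite iter_T.
exact: hcv.
Qed.
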